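(* Let $h$ be a hive which is a vertex (extreme point) of the polytope of all hives having the same border labels as $h$, and suppose every flatspace of $h$ is a small triangle or a small rhombus. Then for every hive vertex $v\in H$, the label $h(v)$ is an integer linear combination of the border labels $h(b)$, $b\in B$.
   Context: Fix $n\ge1$. Hive vertices: $H=\{(p,q)\in\mathbb{Z}^2:p,q\ge0,\ p+q\le n\}$, placed in the plane at $p(1,0)+q(1/2,\sqrt3/2)$, forming a big triangle subdivided into $n^2$ small unit triangles. A rhombus is the union of two small triangles sharing an edge; for integers $p,q\ge0$ with $p+q\le n-2$ the rhombus inequalities are $h(p+1,q)+h(p,q+1)\ge h(p,q)+h(p+1,q+1)$, $h(p+1,q)+h(p+1,q+1)\ge h(p,q+1)+h(p+2,q)$, $h(p,q+1)+h(p+1,q+1)\ge h(p+1,q)+h(p,q+2)$ (obtuse-vertex sum $\ge$ acute-vertex sum). A hive is $h:H\to\mathbb{R}$ satisfying all of them. Border $B$: vertices with $p=0$, $q=0$ or $p+q=n$; the set of hives with prescribed values on $B$ is a compact polytope. A rhombus is flat if its inequality holds with equality. Flatspaces are the unions of small triangles in the classes of the equivalence relation generated by ''share an edge and form a flat rhombus''; a small rhombus flatspace is one consisting of exactly two small triangles. *)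

(* Defs.v *)
From Stdlib Require Import Relations.Relation_Operators.
From mathcomp Require Import all_boot all_order all_algebra.
Set Implicit Arguments. Unset Strict Implicit. Unset Printing Implicit Defensive.
Import Order.TTheory GRing.Theory Num.Theory.
Local Open Scope ring_scope.

(* A labelling of the hive vertices: only values at (p,q) with p+q <= n matter. *)
Definition labelling (R : Type) := nat -> nat -> R.

Definition in_H (n p q : nat) : bool := (p + q <= n)%N.
Definition in_B (n p q : nat) : bool :=
  in_H n p q && [|| p == 0%N, q == 0%N | (p + q == n)%N].

Definition is_hive (R : realFieldType) (n : nat) (h : labelling R) : Prop :=
  forall p q : nat, (p + q + 2 <= n)%N ->
    [/\ h p.+1 q + h p q.+1 >= h p q + h p.+1 q.+1,
        h p.+1 q + h p.+1 q.+1 >= h p q.+1 + h p.+2 q &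
        h p q.+1 + h p.+1 q.+1 >= h p.+1 q + h p q.+2].

Definition same_border (R : Type) (n : nat) (h h' : labelling R) : Prop :=
  forall p q : nat, in_B n p q -> h' p q = h p q.

Definition hive_vertex (R : realFieldType) (n : nat) (h : labelling R) : Prop :=
  is_hive n h /\
  forall (h1 h2 : labelling R) (t : R),
    is_hive n h1 -> same_border n h h1 ->
    is_hive n h2 -> same_border n h h2 ->
    0 < t -> t < 1 ->
    (forall p q, in_H n p q -> h p q = t * h1 p q + (1 - t) * h2 p q) ->
    forall p q, in_H n p q -> h1 p q = h2 p q.

(* small triangles: upright Up p q with vertices (p,q),(p+1,q),(p,q+1)  (p+q <= n-1);
   inverted Down p q with vertices (p+1,q),(p,q+1),(p+1,q+1)  (p+q <= n-2). *)
Inductive small_triangle : Type := Up of nat & nat | Down of nat & nat.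

Definition valid_triangle (n : nat) (T : small_triangle) : Prop :=
  match T with
  | Up p q => (p + q + 1 <= n)%N
  | Down p q => (p + q + 2 <= n)%N
  end.

(* Every rhombus consists of an inverted triangle Down p q and one of its three
   upright neighbours; it is flat iff its inequality is an equality. *)
Inductive flat_step (R : realFieldType) (n : nat) (h : labelling R)
  : small_triangle -> small_triangle -> Prop :=
  | flat1 p q : (p + q + 2 <= n)%N ->
      h p.+1 q + h p q.+1 = h p q + h p.+1 q.+1 ->
      flat_step n h (Down p q) (Up p q)
  | flat2 p q : (p + q + 2 <= n)%N ->
      h p.+1 q + h p.+1 q.+1 = h p q.+1 + h p.+2 q ->
      flat_step n h (Down p q) (Up p.+1 q)
  | flat3 p q : (p + q + 2 <= n)%N ->
      h p q.+1 + h p.+1 q.+1 = h p.+1 q + h p q.+2 ->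
      flat_step n h (Down p q) (Up p q.+1).

(* the equivalence relation generated by "share an edge and form a flat rhombus";
   its classes (of valid triangles) are the flatspaces *)
Definition same_flatspace (R : realFieldType) (n : nat) (h : labelling R) :
  small_triangle -> small_triangle -> Prop :=
  clos_refl_sym_trans small_triangle (flat_step n h).

(* every flatspace is a small triangle or a small rhombus, i.e. every
   flatspace contains at most two small triangles *)
Definition flatspaces_small (R : realFieldType) (n : nat) (h : labelling R) : Prop :=
  forall T T1 T2 : small_triangle,
    valid_triangle n T -> valid_triangle n T1 -> valid_triangle n T2 ->
    same_flatspace n h T T1 -> same_flatspace n h T T2 ->
    T1 = T \/ T2 = T \/ T1 = T2.

Definition int_comb_border (R : realFieldType) (n : nat) (h : labelling R) (x : R) : Prop :=
  exists c : nat -> nat -> int,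
    x = \sum_(p < n.+1) \sum_(q < n.+1 | in_B n p q) (c p q)%:~R * h p q.

(* Main.v *)
Require Import Defs.
From Stdlib Require Import ClassicalEpsilon Classical Relations.Relation_Operators.
From mathcomp Require Import all_boot all_order all_algebra.
From mathcomp Require Import zify ring lra.
Set Implicit Arguments. Unset Strict Implicit. Unset Printing Implicit Defensive.
Import Order.TTheory GRing.Theory Num.Theory.


Definition tri := (bool * nat * nat)%type.
Definition edge := (nat * nat * nat)%type.

Definition tedge (T : tri) (k : nat) : edge :=
  let: (u, p, q) := T in
  if u then (k, p, q) else
  match k with 0 => (0, p, q.+1) | 1 => (1, p.+1, q) | _ => (k, p, q) end.

Definition nbr (T : tri) (k : nat) : tri :=
  let: (u, p, q) := T in
  if u then match k with 0 => (false, p, q.-1) | 1 => (false, p.-1, q) | _ => (false, p, q) end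
  else match k with 0 => (true, p, q.+1) | 1 => (true, p.+1, q) | _ => (true, p, q) end.

Definition int' (e : edge) : bool :=
  let: (k, a, b) := e in match k with 0 => 0 < b | 1 => 0 < a | _ => true end.

Lemma nbrK T k : k < 3 -> int' (tedge T k) ->
  nbr (nbr T k) k = T /\ tedge (nbr T k) k = tedge T k.
Proof.
case: T => [[u p q]]; case: u; case: k => [|[|[|k]]] //= _;
  try (case: q => [|q] //=); try (case: p => [|p] //=).
Qed.

Lemma tedge_inj X Y k k' : k < 3 -> k' < 3 -> tedge X k = tedge Y k' ->
  k = k' /\ (Y = X \/ Y = nbr X k).
Proof.
case: X => [[u p q]]; case: Y => [[u' p' q']].
case: u; case: u'; case: k => [|[|[|k]]] //=; case: k' => [|[|[|k']]] //= _ _ [] //;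
  intros; subst; auto.
Qed.

Definition isUp (T : tri) := T.1.1.

Lemma nbr_up T k : isUp (nbr T k) = ~~ isUp T.
Proof. by case: T => [[u p q]]; case: u; case: k => [|[|[|k]]]. Qed.

Lemma tedge_kind T k : (tedge T k).1.1 = k.
Proof. by case: T => [[u p q]]; case: u; case: k => [|[|[|k]]]. Qed.

Lemma nbr_inj_k T j j' : j < 3 -> j' < 3 -> int' (tedge T j) -> int' (tedge T j') ->
  nbr T j = nbr T j' -> j = j'.
Proof.
case: T => [[u p q]]; case: u; case: j => [|[|[|j]]] //=; case: j' => [|[|[|j']]] //=;
  move=> _ _; try (case: p => [|p]); try (case: q => [|q]) => //= _ _ [] //; lia.
Qed.

Section Comb.
Variable n : nat.

Definition validT (T : tri) : bool :=
  let: (u, p, q) := T in if u then p + q + 1 <= n else p + q + 2 <= n.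
Definition validE (e : edge) : bool :=
  let: (k, a, b) := e in (k < 3) && (a + b + 1 <= n).
Definition borderE (e : edge) : bool :=
  let: (k, a, b) := e in match k with 0 => b == 0 | 1 => a == 0 | _ => a + b + 1 == n end.

Lemma validT_edge T k : validT T -> k < 3 -> validE (tedge T k).
Proof.
case: T => [[u p q]]; case: u; case: k => [|[|[|k]]] //=; lia.
Qed.

Lemma nonborder_int e : validE e -> ~~ borderE e -> int' e.
Proof. case: e => [[k a b]]; case: k => [|[|[|k]]] //=; lia. Qed.

Lemma nbr_valid T k : validT T -> k < 3 -> ~~ borderE (tedge T k) -> validT (nbr T k).
Proof.
case: T => [[u p q]]; case: u; case: k => [|[|[|k]]] //=; lia.
Qed.

End Comb.


Section Lab.
Variable R : realFieldType.
Variable n : nat.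
Local Open Scope ring_scope.

Definition lab (f : nat -> nat -> R) (e : edge) : R :=
  let: (k, a, b) := e in
  match k with 0%N => f a.+1 b - f a b | 1%N => f a b - f a b.+1 | _ => f a b.+1 - f a.+1 b end.

Lemma lab_sum f T : lab f (tedge T 0) + lab f (tedge T 1) + lab f (tedge T 2) = 0.
Proof. case: T => [[u p q]]; case: u => /=; ring. Qed.

Definition flatD (f : nat -> nat -> R) (p q j : nat) : bool :=
  (p + q + 2 <= n)%N &&
  match j with
  | 0%N => f p q.+1 + f p.+1 q.+1 == f p.+1 q + f p q.+2
  | 1%N => f p.+1 q + f p.+1 q.+1 == f p q.+1 + f p.+2 q
  | 2%N => f p.+1 q + f p q.+1 == f p q + f p.+1 q.+1
  | _ => false end.

Definition dc (T : tri) (k : nat) : nat * nat :=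
  let D := if isUp T then nbr T k else T in (D.1.2, D.2).

Definition hasflat f (T : tri) (k : nat) : bool :=
  int' (tedge T k) && flatD f (dc T k).1 (dc T k).2 k.

Lemma hasflat_k f T k : hasflat f T k -> (k < 3)%N.
Proof.
by case/andP=> _; rewrite /flatD; case/andP=> _; case: k => [|[|[|k]]].
Qed.

Lemma hasflat_nbr f T k : hasflat f T k -> hasflat f (nbr T k) k.
Proof.
move=> H; have k3 := hasflat_k H; move: H.
case: T => [[u p q]]; case: u; case: k k3 => [|[|[|k]]] //= _;
  try (case: q => [|q]); try (case: p => [|p]) => //=.
Qed.

Lemma hasflat_valid f T k : hasflat f T k -> validT n T /\ validT n (nbr T k).
Proof.
move=> H; have k3 := hasflat_k H; move: H.
case: T => [[u p q]]; case: u; case: k k3 => [|[|[|k]]] //= _;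
  try (case: q => [|q]); try (case: p => [|p]) => //= /andP[_ /andP[B _]];
  move: B; rewrite /dc /=; lia.
Qed.

Lemma hasflat_lab f T j k : hasflat f T j -> (k < 3)%N -> k != j ->
  lab f (tedge (nbr T j) k) = lab f (tedge T k).
Proof.
move=> H; have j3 := hasflat_k H; move: H.
case: T => [[u p q]]; case: u; case: j j3 => [|[|[|j]]] //= _;
  try (case: q => [|q]); try (case: p => [|p]) => //= /andP[_ /andP[_ /eqP E]];
  case: k => [|[|[|k]]] //= _ _; rewrite /dc /= in E; lra.
Qed.

Lemma flat_of_lab f p q j k : (p + q + 2 <= n)%N -> (j < 3)%N -> (k < 3)%N -> k != j ->
  lab f (tedge (nbr (false, p, q) j) k) = lab f (tedge (false, p, q) k) -> flatD f p q j.
Proof.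
move=> B; case: j => [|[|[|j]]] //= _; case: k => [|[|[|k]]] //= _ _ E;
  rewrite /flatD B /=; apply/eqP; lra.
Qed.

End Lab.


Definition toST (T : tri) : small_triangle :=
  if T.1.1 then Up T.1.2 T.2 else Down T.1.2 T.2.

Lemma toST_inj : injective toST.
Proof. by case=> [[[] p q]] [[[] p' q']] //= [-> ->]. Qed.

Lemma toST_valid n T : validT n T -> valid_triangle n (toST T).
Proof. by case: T => [[[] p q]] /=. Qed.

Section Uniq.
Variable R : realFieldType.
Variable n : nat.
Variable h : labelling R.
Hypothesis Hsmall : flatspaces_small n h.
Local Open Scope ring_scope.

Lemma hasflat_step_down p q j : hasflat n h (false, p, q) j ->
  flat_step n h (toST (false, p, q)) (toST (nbr (false, p, q) j)).
Proof.
move=> H; have j3 := hasflat_k H; move: H.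
rewrite /hasflat /dc /= => /andP[_ /andP[B]].
case: j j3 => [|[|[|j]]] //= _ /eqP E.
- by apply: flat3 .
- by apply: flat2 .
- by apply: flat1 .
Qed.

Lemma hasflat_same T j : hasflat n h T j ->
  same_flatspace n h (toST T) (toST (nbr T j)).
Proof.
move=> H; have j3 := hasflat_k H.
case: T H => [[[] p q]] H; last first.
  by apply: rst_step; apply: hasflat_step_down.
have H' := hasflat_nbr H.
have [K1 _] := nbrK j3 (proj1 (andP H)).
have Hu : isUp (nbr (true, p, q) j) = false by rewrite nbr_up.
move: H' Hu K1; case: (nbr (true, p, q) j) => [[u p' q']] H' Hu K1.
have Hu' : u = false := Hu. subst u.
have S : same_flatspace n h (toST (false, p', q')) (toST (nbr (false, p', q') j)).
  by apply: rst_step; apply: hasflat_step_down.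
rewrite K1 in S.
rewrite /same_flatspace in S *; exact: rst_sym S.
Qed.

Lemma flat_uniq T j j' : validT n T -> hasflat n h T j -> hasflat n h T j' -> j = j'.
Proof.
move=> V H H'.
have j3 := hasflat_k H; have j'3 := hasflat_k H'.
have [_ V1] := hasflat_valid H; have [_ V2] := hasflat_valid H'.
have := Hsmall (toST_valid V) (toST_valid V1) (toST_valid V2)
  (hasflat_same H) (hasflat_same H').
have ne : forall k, toST (nbr T k) <> toST T.
  move=> k /toST_inj E; have := nbr_up T k; rewrite E; by case: (isUp T).
case=> [/ne|[/ne|/toST_inj E]] //.
exact: nbr_inj_k j3 j'3 (proj1 (andP H)) (proj1 (andP H')) E.
Qed.

End Uniq.


Section Good.
Variable R : realFieldType.
Variable n : nat.
Variable h : labelling R.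
Local Open Scope ring_scope.

Notation Gd := (int_comb_border n h).

Lemma Gd_add x y : Gd x -> Gd y -> Gd (x + y).
Proof.
move=> [c1 ->] [c2 ->]; exists (fun p q => c1 p q + c2 p q).
rewrite -big_split /=; apply: eq_bigr => p _.
rewrite -big_split /=; apply: eq_bigr => q _.
by rewrite intrD mulrDl.
Qed.

Lemma Gd_opp x : Gd x -> Gd (- x).
Proof.
move=> [c ->]; exists (fun p q => - c p q).
rewrite -sumrN; apply: eq_bigr => p _.
rewrite -sumrN; apply: eq_bigr => q _.
by rewrite intrN mulNr.
Qed.

Lemma Gd_sub x y : Gd x -> Gd y -> Gd (x - y).
Proof. by move=> Hx Hy; apply: Gd_add => //; apply: Gd_opp. Qed.

Lemma Gd_border p q : in_B n p q -> Gd (h p q).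
Proof.
move=> HB.
have Hp : (p < n.+1)%N by move: HB; rewrite /in_B /in_H => /andP[]; lia.
have Hq : (q < n.+1)%N by move: HB; rewrite /in_B /in_H => /andP[]; lia.
exists (fun a b => ((a == p) && (b == q))%:R).
rewrite (bigD1 (Ordinal Hp)) //= [X in _ + X]big1 ?addr0; last first.
  move=> a /eqP Ha; apply: big1 => b _.
  have -> : (a == p :> nat) = false.
    by apply/eqP => E; apply: Ha; apply: val_inj.
  by rewrite mul0r.
rewrite (bigD1 (Ordinal Hq)) //= [X in _ + X]big1 ?addr0; last first.
  move=> b /andP[_ /eqP Hb].
  have -> : (b == q :> nat) = false.
    by apply/eqP => E; apply: Hb; apply: val_inj.
  by rewrite andbF mul0r.
by rewrite !eqxx /= mul1r.
Qed.

End Good.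


Section Perturb.
Variable R : realFieldType.
Local Open Scope ring_scope.

Lemma eps_seq (I : eqType) (s : seq I) (S G : I -> R) :
  (forall i, 0 <= S i) -> (forall i, S i = 0 -> G i = 0) ->
  exists e : R, 0 < e /\ forall i, i \in s -> e * `|G i| <= S i.
Proof.
move=> S0 SG; elim: s => [|i s [e [e0 He]]].
  by exists 1; split => //.
have [Si0|Sine] := eqVneq (S i) 0.
  exists e; split => // j; rewrite inE => /orP[/eqP ->|/He //].
  by rewrite SG // normr0 mulr0 Si0.
have Sip : 0 < S i by rewrite lt_def Sine S0.
set d := `|G i| + 1.
have d0 : 0 < d by rewrite /d ltr_wpDl.
exists (Num.min e (S i / d)); split.
  by rewrite lt_min e0 divr_gt0.
move=> j; rewrite inE => /orP[/eqP ->|/He Hj].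
  apply: le_trans (_ : S i / d * `|G i| <= S i).
    by rewrite ler_wpM2r // ge_min lexx orbT.
  rewrite mulrAC ler_pdivrMr // ler_wpM2l //.
  by rewrite /d lerDl.
apply: le_trans Hj; rewrite ler_wpM2r //.
by rewrite ge_min lexx.
Qed.

Variable n : nat.
Variable h : labelling R.

Definition sl (f : labelling R) (p q j : nat) : R :=
  match j with
  | 0%N => f p q.+1 + f p.+1 q.+1 - (f p.+1 q + f p q.+2)
  | 1%N => f p.+1 q + f p.+1 q.+1 - (f p q.+1 + f p.+2 q)
  | _ => f p.+1 q + f p q.+1 - (f p q + f p.+1 q.+1) end.

Lemma flatD_sl f p q j : (j < 3)%N -> flatD n f p q j = (p + q + 2 <= n)%N && (sl f p q j == 0).
Proof.
by case: j => [|[|[|j]]] //= _; rewrite /flatD /= subr_eq0.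
Qed.

Lemma hive_sl f : is_hive n f <-> forall p q j, (p + q + 2 <= n)%N -> (j < 3)%N -> 0 <= sl f p q j.
Proof.
split.
  move=> H p q j B; have [H1 H2 H3] := H p q B.
  by case: j => [|[|[|j]]] //= _; rewrite subr_ge0.
move=> H p q B; split; rewrite -subr_ge0.
- exact: (H p q 2%N).
- exact: (H p q 1%N).
- exact: (H p q 0%N).
Qed.

Lemma perturb : hive_vertex n h -> forall g : labelling R,
  (forall p q, in_B n p q -> g p q = 0) ->
  (forall p q j, (j < 3)%N -> flatD n h p q j -> flatD n g p q j) ->
  forall p q, in_H n p q -> g p q = 0.
Proof.
move=> [Hh Hv] g gB gF.
pose S (i : 'I_n.+1 * 'I_n.+1 * 'I_3) := if (i.1.1 + i.1.2 + 2 <= n)%N then sl h i.1.1 i.1.2 i.2 else 0.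
pose G (i : 'I_n.+1 * 'I_n.+1 * 'I_3) := if (i.1.1 + i.1.2 + 2 <= n)%N then sl g i.1.1 i.1.2 i.2 else 0.
have [e [e0 He]] : exists e : R, 0 < e /\ forall i : 'I_n.+1 * 'I_n.+1 * 'I_3, i \in enum predT -> e * `|G i| <= S i.
  apply: eps_seq.
    move=> [[p q] j]; rewrite /S /=; case: ifP => // B.
    by apply: (proj1 (hive_sl h) Hh).
  move=> [[p q] j]; rewrite /S /G /=; case: ifP => // B /eqP E.
  have := gF p q j (ltn_ord j); rewrite !flatD_sl // B E /= => /(_ isT) /eqP //.
have key : forall p q j, (p + q + 2 <= n)%N -> (j < 3)%N -> e * `|sl g p q j| <= sl h p q j.
  move=> p q j B j3.
  have Hp : (p < n.+1)%N by lia.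
  have Hq : (q < n.+1)%N by lia.
  have := He (Ordinal Hp, Ordinal Hq, Ordinal j3) ltac:(by rewrite mem_enum).
  by rewrite /S /G /= B.
pose h1 : labelling R := fun p q => h p q + e * g p q.
pose h2 : labelling R := fun p q => h p q - e * g p q.
have sl1 : forall p q j, sl h1 p q j = sl h p q j + e * sl g p q j.
  by move=> p q [|[|[|j]]] /=; rewrite /h1; ring.
have sl2 : forall p q j, sl h2 p q j = sl h p q j - e * sl g p q j.
  by move=> p q [|[|[|j]]] /=; rewrite /h2; ring.
have Hh1 : is_hive n h1.
  apply/hive_sl => p q j B j3; rewrite sl1.
  have := key p q j B j3.
  have : - `|sl g p q j| <= sl g p q j by rewrite lerNnormlW.
  move=> /(ler_wpM2l (ltW e0)); rewrite mulrN; lra.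
have Hh2 : is_hive n h2.
  apply/hive_sl => p q j B j3; rewrite sl2.
  have := key p q j B j3.
  have : sl g p q j <= `|sl g p q j| by rewrite ler_norm.
  move=> /(ler_wpM2l (ltW e0)); lra.
have Hb1 : same_border n h h1 by move=> p q Bd; rewrite /h1 gB // mulr0 addr0.
have Hb2 : same_border n h h2 by move=> p q Bd; rewrite /h2 gB // mulr0 subr0.
have t0 : (0 : R) < 1 / 2 by rewrite divr_gt0.
have t1 : (1 / 2 : R) < 1 by rewrite ltr_pdivrMr // mul1r ltr1n.
have := Hv h1 h2 (1 / 2) Hh1 Hb1 Hh2 Hb2 t0 t1.
move=> H p q Hpq.
have E : h1 p q = h2 p q.
  apply: H Hpq => a b _; rewrite /h1 /h2.
  have two : (2 : R) != 0 by rewrite pnatr_eq0.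
  by field.
move: E; rewrite /h1 /h2 => E.
have : 2 * e * g p q = 0 by lra.
move/eqP; rewrite !mulf_eq0 pnatr_eq0 /= (gt_eqF e0) /= => /eqP //.
Qed.

End Perturb.


Section Walk.
Variable R : realFieldType.
Variable n : nat.
Variable h : labelling R.
Hypothesis Hsmall : flatspaces_small n h.
Local Open Scope ring_scope.

Notation Gd := (int_comb_border n h).

Definition ok (s : tri * nat) : Prop :=
  [/\ (s.2 < 3)%N, validT n s.1, ~ Gd (lab h (tedge s.1 s.2)), ~~ hasflat n h s.1 s.2 &
      (int' (tedge s.1 s.2) /\ validT n (nbr s.1 s.2))].

Definition compat (s s' : tri * nat) : Prop :=
  (exists j, [/\ (j < 3)%N, hasflat n h s.1 j, j != s.2, s'.2 = s.2 &
      (s'.1 = nbr (nbr s.1 j) s.2 /\ int' (tedge (nbr s.1 j) s.2))])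
  \/ ((forall j, (j < 3)%N -> ~~ hasflat n h s.1 j) /\
      [/\ s'.2 != s.2, (s'.2 < 3)%N, s'.1 = nbr s.1 s'.2 & int' (tedge s.1 s'.2)]).

Lemma border_Gd e : validE n e -> borderE n e -> Gd (lab h e).
Proof.
case: e => [[k a b]]; case: k => [|[|[|k]]] //= B /eqP E; subst;
  apply: Gd_sub; apply: Gd_border; rewrite /in_B /in_H; apply/andP; split;
  rewrite ?eqxx ?orbT //; try lia.
Qed.

Lemma bad_int e : validE n e -> ~ Gd (lab h e) -> int' e /\ ~~ borderE n e.
Proof.
move=> V B; have nb : ~~ borderE n e by apply/negP => Hb; exact: B (border_Gd V Hb).
split => //; exact: (nonborder_int V nb).
Qed.

Lemma step_ok X k : validT n X -> (k < 3)%N -> ~ Gd (lab h (tedge X k)) ->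
  ~~ hasflat n h X k -> ok (nbr X k, k).
Proof.
move=> V k3 B nF.
have [I nb] := bad_int (validT_edge V k3) B.
have [K1 K2] := nbrK k3 I.
split => //=.
- exact: nbr_valid.
- by rewrite K2.
- apply/negP => /hasflat_nbr; rewrite K1; exact/negP.
- by rewrite K2 K1.
Qed.

Lemma other_bad T k : (k < 3)%N -> ~ Gd (lab h (tedge T k)) ->
  exists k', [/\ (k' < 3)%N, k' != k & ~ Gd (lab h (tedge T k'))].
Proof.
move=> k3 B; apply: NNPP => H; apply: B.
have G : forall k', (k' < 3)%N -> k' != k -> Gd (lab h (tedge T k')).
  move=> k' k'3 ne; apply: NNPP => nG; apply: H; by exists k'.
have S := lab_sum h T.
clear H; case: k k3 G => [|[|[|k]]] //= _ G.
- have -> : lab h (tedge T 0) = - (lab h (tedge T 1) + lab h (tedge T 2)) by lra.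
  by apply: Gd_opp; apply: Gd_add; apply: G.
- have -> : lab h (tedge T 1) = - (lab h (tedge T 0) + lab h (tedge T 2)) by lra.
  by apply: Gd_opp; apply: Gd_add; apply: G.
- have -> : lab h (tedge T 2) = - (lab h (tedge T 0) + lab h (tedge T 1)) by lra.
  by apply: Gd_opp; apply: Gd_add; apply: G.
Qed.

Lemma succ_ex s : ok s -> exists s', compat s s' /\ ok s'.
Proof.
case: s => T k [/= k3 V B nF [I Vn]].
case: (classic (exists j, (j < 3)%N /\ hasflat n h T j)) => [[j [j3 Hj]]|nofl].
  have jk : j != k by apply/eqP => E; subst; rewrite Hj in nF.
  have [VT VP] := hasflat_valid Hj.
  have kj : k != j by rewrite eq_sym.
  have Ll := hasflat_lab Hj k3 kj.
  have BP : ~ Gd (lab h (tedge (nbr T j) k)) by rewrite Ll.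
  have [IP _] := bad_int (validT_edge VP k3) BP.
  exists (nbr (nbr T j) k, k); split.
    by left; exists j; split.
  apply: step_ok => //.
  apply/negP => HP.
  have := flat_uniq Hsmall VP HP (hasflat_nbr Hj) => E; subst.
  by rewrite eqxx in jk.
have nofl' : forall j, (j < 3)%N -> ~~ hasflat n h T j.
  by move=> j j3; apply/negP => Hj; apply: nofl; exists j.
have [k' [k'3 ne B']] := other_bad k3 B.
have [I' _] := bad_int (validT_edge V k'3) B'.
exists (nbr T k', k'); split.
  by right; split => //; split.
by apply: step_ok => //; apply: nofl'.
Qed.

End Walk.


Definition sgnT (R : realFieldType) (T : tri) : R := (if isUp T then 1 else -1)%R.

Lemma nbr_neq T k : nbr T k != T.
Proof. apply/eqP => E; have := nbr_up T k; rewrite E; by case: (isUp T). Qed.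

Section Flow.
Variable R : realFieldType.
Variable n : nat.
Variable h : labelling R.
Hypothesis Hsmall : flatspaces_small n h.
Local Open Scope ring_scope.
Notation Gd := (int_comb_border n h).
Variable c : nat -> tri * nat.
Variable m : nat.
Hypothesis m0 : (0 < m)%N.
Hypothesis cok : forall t, ok n h (c t).
Hypothesis ccomp : forall t, compat n h (c t) (c t.+1).
Hypothesis cper : c m = c 0.
Hypothesis cnz : forall t, (0 < t < m)%N -> tedge (c t).1 (c t).2 != tedge (c 0).1 (c 0).2.

Definition fl (E : edge) : R :=
  \sum_(t < m) (if tedge (c t).1 (c t).2 == E then sgnT R (c t).1 else 0).

Lemma shift (phi : tri * nat -> R) : \sum_(t < m) phi (c t.+1) = \sum_(t < m) phi (c t).
Proof.
have Em : m = m.-1.+1 by rewrite prednK.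
rewrite [in LHS]Em [in RHS]Em big_ord_recr big_ord_recl /= -Em cper addrC.
congr (_ + _); apply: eq_bigr => i _ /=; by rewrite /bump /=.
Qed.

Lemma sum3 (k : nat) (b : bool) (x : R) : (k < 3)%N ->
  (if (0 == k)%N && b then x else 0) + (if (1 == k)%N && b then x else 0)
  + (if (2 == k)%N && b then x else 0) = if b then x else 0.
Proof. by case: k => [|[|[|k]]] //= _; case: b; rewrite ?addr0 ?add0r. Qed.

Lemma pert (s : tri * nat) (T : tri) : (s.2 < 3)%N -> int' (tedge s.1 s.2) ->
  (if tedge s.1 s.2 == tedge T 0 then sgnT R s.1 else 0)
  + (if tedge s.1 s.2 == tedge T 1 then sgnT R s.1 else 0)
  + (if tedge s.1 s.2 == tedge T 2 then sgnT R s.1 else 0)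
  = sgnT R T * ((s.1 == T)%:R - (nbr s.1 s.2 == T)%:R).
Proof.
case: s => X k /= k3 I.
have [K1 K2] := nbrK k3 I.
have ind : forall k', (tedge X k == tedge T k') = (k' == k)%N && (tedge X k == tedge T k).
  move=> k'; case E: (tedge X k == tedge T k'); last first.
    case: eqP => // E'; subst k'; by rewrite E.
  have := congr1 (fun e : edge => e.1.1) (eqP E); rewrite /= !tedge_kind => Ek.
  by subst k'; rewrite eqxx E.
rewrite (ind 0%N) (ind 1%N) (ind 2%N) sum3 //.
have key : (tedge X k == tedge T k) = (X == T) || (nbr X k == T).
  apply/idP/idP.
    move/eqP => E; have [_ [->|->]] := tedge_inj k3 k3 E; by rewrite eqxx ?orbT.
  by case/orP => /eqP <-; rewrite ?K2.
rewrite key; case: (eqVneq X T) => [<-|XT] /=.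
  by rewrite (negbTE (nbr_neq X k)) subr0 mulr1.
case: (eqVneq (nbr X k) T) => [<-|NT] /=.
  by rewrite /sgnT nbr_up; case: (isUp X); rewrite /= sub0r ?mulrN1 ?mulN1r ?opprK.
by rewrite subrr mulr0.
Qed.

Lemma Ysrc t T : (forall j, (j < 3)%N -> ~~ hasflat n h T j) ->
  (nbr (c t.+1).1 (c t.+1).2 == T) = ((c t).1 == T).
Proof.
move=> nof; have [k3 _ _ _ _] := cok t.
case: (ccomp t) => [[j [j3 Hj jk E2 [E1 I']]]|[nofX [ne k'3 E1 I']]].
  rewrite E1 E2 (proj1 (nbrK k3 I')).
  case: (eqVneq (nbr (c t).1 j) T) => [E|_].
    by have := hasflat_nbr Hj; rewrite E (negbTE (nof j j3)).
  case: (eqVneq (c t).1 T) => [E|//].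
  by move: Hj; rewrite E (negbTE (nof j j3)).
by rewrite E1 (proj1 (nbrK k'3 I')).
Qed.

Lemma consY T : (forall j, (j < 3)%N -> ~~ hasflat n h T j) ->
  fl (tedge T 0) + fl (tedge T 1) + fl (tedge T 2) = 0.
Proof.
move=> nof; rewrite /fl -!big_split /=.
rewrite (eq_bigr (fun t : 'I_m => sgnT R T * (((c t).1 == T)%:R - (nbr (c t).1 (c t).2 == T)%:R))); last first.
  move=> t _; have [k3 _ _ _ [I _]] := cok t; exact: pert.
rewrite -mulr_sumr sumrB.
have -> : \sum_(i < m) ((nbr (c i).1 (c i).2 == T)%:R : R) = \sum_(i < m) (((c i).1 == T)%:R : R).
  rewrite -(shift (fun s => ((nbr s.1 s.2 == T)%:R : R))).
  by apply: eq_bigr => i _; rewrite Ysrc.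
by rewrite subrr mulr0.
Qed.

Lemma fl_good E : Gd (lab h E) -> fl E = 0.
Proof.
move=> G; rewrite /fl big1 // => t _.
case: eqP => // Et; have [_ _ B _ _] := cok t.
by exfalso; apply: B; rewrite Et.
Qed.

Lemma fl_rep T k : (k < 3)%N -> int' (tedge T k) ->
  fl (tedge T k) = sgnT R T * (\sum_(t < m) ((c t == (T, k))%:R : R)
                               - \sum_(t < m) ((c t == (nbr T k, k))%:R : R)).
Proof.
move=> k3 I; rewrite -sumrB mulr_sumr /fl; apply: eq_bigr => t _.
have [K1 K2] := nbrK k3 I.
have [k03 _ _ _ [I0 _]] := cok t.
case: (c t) k03 I0 => X k0 /= k03 I0.
case: (eqVneq (X, k0) (T, k)) => [E|ne1].
  case: E => -> ->.
  have nn : (T == nbr T k) = false by rewrite eq_sym (negbTE (nbr_neq T k)).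
  by rewrite eqxx xpair_eqE nn /= subr0 mulr1.
case: (eqVneq (X, k0) (nbr T k, k)) => [E|ne2].
  case: E => -> ->.
  by rewrite K2 eqxx /sgnT nbr_up; case: (isUp T); rewrite /= sub0r ?mulrN1 ?opprK.
rewrite subrr mulr0; case: eqP => // E.
have [Ek [Et|Et]] := tedge_inj k03 k3 E; subst k0.
  by rewrite Et eqxx in ne1.
have [K1' _] := nbrK k3 I0.
by rewrite Et K1' eqxx in ne2.
Qed.

Lemma CL T j k t : validT n T -> hasflat n h T j -> (k < 3)%N -> k != j ->
  int' (tedge (nbr T j) k) ->
  (c t == (T, k)) = (c t.+1 == (nbr (nbr T j) k, k)).
Proof.
move=> V Hj k3 kj IP.
have j3 := hasflat_k Hj.
have [VT VP] := hasflat_valid Hj.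
have IT : int' (tedge T j) by case/andP: Hj.
have [KT1 _] := nbrK j3 IT.
have HP : hasflat n h (nbr T j) j := hasflat_nbr Hj.
have [KP1 _] := nbrK k3 IP.
case: (ccomp t) => [[j' [j'3 Hj' jk E2 [E1 I']]]|[nofX [ne k'3 E1 I']]].
- apply/idP/idP.
    move/eqP => Ect; rewrite Ect /= in Hj' jk E1 E2 I'.
    have ej : j' = j := flat_uniq Hsmall V Hj' Hj; subst j'.
    by case: (c t.+1) E1 E2 => X' k' /= -> ->.
  move/eqP => Ect; rewrite Ect /= in E1 E2.
  have k0k : (c t).2 = k by rewrite -E2.
  rewrite k0k in E1 I'.
  have [K1' _] := nbrK k3 I'.
  have EP : nbr (c t).1 j' = nbr T j.
    by rewrite -K1' -E1 KP1.
  have HP' : hasflat n h (nbr T j) j' by rewrite -EP; apply: hasflat_nbr.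
  have ej : j' = j := flat_uniq Hsmall VP HP' HP; subst j'.
  have IX : int' (tedge (c t).1 j) by case/andP: Hj'.
  have [KX _] := nbrK j3 IX.
  apply/eqP; case: (c t) KX EP k0k => X k0 /= KX EP ->.
  by rewrite -KX EP KT1.
- apply/idP/idP.
    move/eqP => Ect; rewrite Ect /= in nofX.
    by move: (nofX j j3); rewrite Hj.
  move/eqP => Ect; rewrite Ect /= in E1 ne k'3 I'.
  have [K1' _] := nbrK k'3 I'.
  have EX : (c t).1 = nbr T j by rewrite -K1' -E1 KP1.
  move: (nofX j j3); rewrite EX.
  by have := hasflat_nbr Hj => ->.
Qed.

Lemma consR T j k : validT n T -> hasflat n h T j -> (k < 3)%N -> k != j ->
  fl (tedge (nbr T j) k) = fl (tedge T k).
Proof.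
move=> V Hj k3 kj.
case: (classic (Gd (lab h (tedge T k)))) => G.
  have G' : Gd (lab h (tedge (nbr T j) k)) by rewrite (hasflat_lab Hj k3 kj).
  by rewrite (fl_good G) (fl_good G').
have j3 := hasflat_k Hj.
have [VT VP] := hasflat_valid Hj.
have [IT _] := bad_int Hsmall (validT_edge V k3) G.
have GP : ~ Gd (lab h (tedge (nbr T j) k)) by rewrite (hasflat_lab Hj k3 kj).
have [IP _] := bad_int Hsmall (validT_edge VP k3) GP.
have HP := hasflat_nbr Hj.
have ITj : int' (tedge T j) by case/andP: Hj.
have [KT1 _] := nbrK j3 ITj.
have e1 : \sum_(t < m) ((c t == (T, k))%:R : R)
        = \sum_(t < m) ((c t == (nbr (nbr T j) k, k))%:R : R).
  rewrite -(shift (fun s => ((s == (nbr (nbr T j) k, k))%:R : R))).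
  by apply: eq_bigr => t _; rewrite (CL t V Hj k3 kj IP).
have e2 : \sum_(t < m) ((c t == (nbr T j, k))%:R : R)
        = \sum_(t < m) ((c t == (nbr T k, k))%:R : R).
  rewrite -(shift (fun s => ((s == (nbr T k, k))%:R : R))).
  apply: eq_bigr => t _.
  have IP' : int' (tedge (nbr (nbr T j) j) k) by rewrite KT1.
  by rewrite (CL t VP HP k3 kj IP') KT1.
rewrite !fl_rep // e1 e2 /sgnT nbr_up; case: (isUp T) => /=; ring.
Qed.

Lemma fl_nz : fl (tedge (c 0).1 (c 0).2) = sgnT R (c 0).1.
Proof.
rewrite /fl (bigD1 (Ordinal m0)) //= eqxx big1 ?addr0 // => i ne.
rewrite ifF //; apply: negbTE; apply: cnz.
have : (i : nat) != 0%N.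
  apply: contra ne => /eqP E; apply/eqP; exact: val_inj.
by rewrite ltn_ord andbT lt0n.
Qed.

Definition Fl (E : edge) : R :=
  if hasflat n h (true, E.1.2, E.2) E.1.1 then
    fl E - (fl (tedge (true, E.1.2, E.2) 0) + fl (tedge (true, E.1.2, E.2) 1)
            + fl (tedge (true, E.1.2, E.2) 2))
  else fl E.

Definition gg (p q : nat) : R := \sum_(i < p) Fl (0%N, (i : nat), q).

Lemma hasflat_down_nbr p q k : (k < 3)%N ->
  hasflat n h (nbr (false, p, q) k) k = hasflat n h (false, p, q) k.
Proof.
move=> k3; apply/idP/idP; last exact: hasflat_nbr.
move/hasflat_nbr.
have I : int' (tedge (false, p, q) k) by case: k k3 => [|[|[|k]]].
by rewrite (proj1 (nbrK k3 I)).
Qed.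

Lemma owner_down p q k : (k < 3)%N ->
  (true, (tedge (false, p, q) k).1.2, (tedge (false, p, q) k).2) = nbr (false, p, q) k.
Proof. by case: k => [|[|[|k]]]. Qed.



Lemma Fl_nf T k : validT n T -> (k < 3)%N -> ~~ hasflat n h T k -> Fl (tedge T k) = fl (tedge T k).
Proof.
move=> V k3 nf; rewrite /Fl.
case: T V nf => [[[] p q]] V nf.
  by rewrite /= (negbTE nf).
by rewrite owner_down // tedge_kind hasflat_down_nbr // (negbTE nf).
Qed.



Lemma FconsU a b : validT n (true, a, b) ->
  Fl (tedge (true, a, b) 0) + Fl (tedge (true, a, b) 1) + Fl (tedge (true, a, b) 2) = 0.
Proof.
move=> V.
case: (classic (exists j, (j < 3)%N /\ hasflat n h (true, a, b) j)) => [[j [j3 Hj]]|nof].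
  have nf : forall k, (k < 3)%N -> k != j -> ~~ hasflat n h (true, a, b) k.
    move=> k k3 kj; apply/negP => Hk; move: kj; by rewrite (flat_uniq Hsmall V Hk Hj) eqxx.
  rewrite /Fl /=.
  case: j j3 Hj nf => [|[|[|j]]] //= _ Hj nf;
    rewrite Hj ?(negbTE (nf 0%N _ _)) ?(negbTE (nf 1%N _ _)) ?(negbTE (nf 2%N _ _)) //; ring.
have nf : forall k, (k < 3)%N -> ~~ hasflat n h (true, a, b) k.
  by move=> k k3; apply/negP => Hk; apply: nof; exists k.
rewrite !Fl_nf //; first exact: consY.
all: try exact: nf.
Qed.

Lemma FconsD p q : validT n (false, p, q) ->
  Fl (tedge (false, p, q) 0) + Fl (tedge (false, p, q) 1) + Fl (tedge (false, p, q) 2) = 0.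
Proof.
move=> V; set D := (false, p, q).
case: (classic (exists j, (j < 3)%N /\ hasflat n h D j)) => [[j [j3 Hj]]|nof]; last first.
  have nf : forall k, (k < 3)%N -> ~~ hasflat n h D k.
    by move=> k k3; apply/negP => Hk; apply: nof; exists k.
  by rewrite !Fl_nf //; try exact: nf; exact: consY.
have nf : forall k, (k < 3)%N -> k != j -> ~~ hasflat n h D k.
  move=> k k3 kj; apply/negP => Hk; move: kj; by rewrite (flat_uniq Hsmall V Hk Hj) eqxx.
have Fj : Fl (tedge D j) = fl (tedge D j) -
    (fl (tedge (nbr D j) 0) + fl (tedge (nbr D j) 1) + fl (tedge (nbr D j) 2)).
  by rewrite /Fl owner_down // tedge_kind hasflat_down_nbr // Hj.
have Fk : forall k, (k < 3)%N -> k != j -> Fl (tedge D k) = fl (tedge (nbr D j) k).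
  move=> k k3 kj; rewrite Fl_nf //; last exact: nf.
  by rewrite (consR V Hj k3 kj).
have ITj : int' (tedge D j) by case/andP: Hj.
have [_ K2] := nbrK j3 ITj.
case: j j3 Hj nf Fj Fk K2 ITj => [|[|[|j]]] //= _ Hj nf Fj Fk K2 ITj.
- rewrite Fj (Fk 1%N) // (Fk 2%N) //; try rewrite K2; ring.
- rewrite Fj (Fk 0%N) // (Fk 2%N) //; try rewrite K2; ring.
- rewrite Fj (Fk 0%N) // (Fk 1%N) //; try rewrite K2; ring.
Qed.

Lemma Fl_border e : validE n e -> borderE n e -> Fl e = 0.
Proof.
move=> V B.
have nf : hasflat n h (true, e.1.2, e.2) e.1.1 = false.
  move: V B; case: e => [[k a b]] /=; rewrite /hasflat /flatD /dc /=.
  case: k => [|[|[|k]]] //= _ /eqP E; subst; rewrite ?andbF //.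
  by have -> : (a + b + 2 <= a + b + 1)%N = false by lia.
rewrite /Fl nf; apply: fl_good.
exact (border_Gd Hsmall V B).
Qed.

Lemma gg0 q : gg 0 q = 0.
Proof. by rewrite /gg big_ord0. Qed.

Lemma ggS p q : gg p.+1 q = gg p q + Fl (0%N, p, q).
Proof. by rewrite /gg big_ord_recr. Qed.

Lemma gg1 p q : (p + q + 1 <= n)%N -> gg p q - gg p q.+1 = Fl (1%N, p, q).
Proof.
elim: p => [|p IH] B.
  rewrite !gg0 subrr Fl_border //=; lia.
have U := FconsU (_ : validT n (true, p, q)); have D := FconsD (_ : validT n (false, p, q)).
rewrite /= in U D.
rewrite !ggS.
have Ih := IH (_ : (p + q + 1 <= n)%N).
have u := U ltac:(rewrite /=; lia); have d := D ltac:(rewrite /=; lia).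
have ih := Ih ltac:(lia).
lra.
Qed.

Lemma gg2 p q : (p + q + 1 <= n)%N -> gg p q.+1 - gg p.+1 q = Fl (2%N, p, q).
Proof.
move=> B; have U := FconsU (_ : validT n (true, p, q)).
have u := U ltac:(rewrite /=; lia); rewrite /= in u.
have := gg1 B; rewrite ggS; lra.
Qed.

Lemma lab_gg T k : validT n T -> (k < 3)%N -> lab gg (tedge T k) = Fl (tedge T k).
Proof.
case: T => [[[] p q]] /= V; case: k => [|[|[|k]]] //= _.
- by rewrite ggS; ring.
- by rewrite gg1.
- by rewrite gg2.
- by rewrite ggS; ring.
- rewrite gg1 //; lia.
- rewrite gg2 //; lia.
Qed.

Lemma gg_border p q : in_B n p q -> gg p q = 0.
Proof.
rewrite /in_B /in_H => /andP[B /orP[/eqP ->|/orP[/eqP ->|/eqP E]]].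
- exact: gg0.
- rewrite /gg big1 // => i _; apply: Fl_border => /=; last by [].
  have := ltn_ord i; lia.
elim: p q B E => [|p IH] q B E; first exact: gg0.
have := gg2 (_ : (p + q + 1 <= n)%N) => /(_ ltac:(lia)).
rewrite Fl_border /=; last by apply/eqP; lia.
  rewrite IH; [lra|lia|lia].
lia.
Qed.

Lemma gg_flat p q j : (j < 3)%N -> flatD n h p q j -> flatD n gg p q j.
Proof.
move=> j3 F.
set D := (false, p, q).
have Hj : hasflat n h D j.
  by rewrite /hasflat /dc /= F; case: j j3 {F} => [|[|[|j]]].
have [VD VP] := hasflat_valid Hj.
have [k [k3 kj]] : exists k, (k < 3)%N /\ k != j.
  by case: (j) j3 => [|[|[|]]] // _; [exists 1%N | exists 0%N | exists 0%N].
have B : (p + q + 2 <= n)%N by move: VD.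
apply: (flat_of_lab B j3 k3 kj).
have nfP : ~~ hasflat n h (nbr D j) k.
  apply/negP => Hk; have := flat_uniq Hsmall VP Hk (hasflat_nbr Hj) => E.
  by rewrite E eqxx in kj.
have nfD : ~~ hasflat n h D k.
  apply/negP => Hk; have := flat_uniq Hsmall VD Hk Hj => E.
  by rewrite E eqxx in kj.
rewrite !lab_gg // !Fl_nf //.
exact: consR VD Hj k3 kj.
Qed.

Lemma cyc_false : hive_vertex n h -> False.
Proof.
move=> Hv.
have g0 := perturb Hv gg_border gg_flat.
have [k3 V _ nf _] := cok 0.
have := lab_gg V k3; rewrite Fl_nf // fl_nz.
have Ve := validT_edge V k3.
have -> : lab gg (tedge (c 0).1 (c 0).2) = 0.
  move: Ve; case: (tedge _ _) => [[k a b]] /= /andP[_ B].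
  case: k => [|[|k]] /=; rewrite !g0 ?subrr // /in_H; lia.
rewrite /sgnT; case: (isUp _) => /= /eqP; rewrite eq_sym ?oppr_eq0 oner_eq0 //.
Qed.

End Flow.


Section Cyc.
Variable R : realFieldType.
Variable n : nat.
Variable h : labelling R.
Hypothesis Hsmall : flatspaces_small n h.
Hypothesis Hv : hive_vertex n h.
Local Open Scope ring_scope.
Notation Gd := (int_comb_border n h).
Variable w : nat -> tri * nat.
Hypothesis wok : forall t, ok n h (w t).
Hypothesis wcomp : forall t, compat n h (w t) (w t.+1).
Notation E t := (tedge (w t).1 (w t).2).

Lemma cyc_from st m : (0 < m)%N -> compat n h (w (st + m.-1)) (w st) ->
  (forall t, (0 < t < m)%N -> E (st + t) != E st) -> False.
Proof.
move=> m0 wrap dist.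
pose c t := w (st + t %% m).
apply: (@cyc_false R n h Hsmall c m m0) => //.
- by move=> t; apply: wok.
- move=> t; rewrite /c.
  have rm : (t %% m < m)%N by rewrite ltn_pmod.
  case: (ltnP (t %% m).+1 m) => H.
    have -> : (t.+1 %% m = (t %% m).+1)%N.
      by rewrite {1}(divn_eq t m) -addnS modnMDl modn_small.
    by rewrite addnS.
  have Er : (t %% m).+1 = m by apply/eqP; rewrite eqn_leq H rm.
  have -> : (t.+1 %% m = 0)%N.
    by rewrite {1}(divn_eq t m) -addnS Er modnMDl modnn.
  have Em : (t %% m = m.-1)%N by move: Er; set r := (t %% m)%N; lia.
  by rewrite addn0 Em.
- by rewrite /c modnn mod0n.
- move=> t Ht; rewrite /c mod0n addn0 modn_small; last by case/andP: Ht.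
  exact: dist.
Qed.

Lemma pair_eta (s : tri * nat) : s = (s.1, s.2).
Proof. by case: s. Qed.

Lemma repeat_false i0 j0 : (i0 < j0)%N -> E i0 = E j0 ->
  (forall a b, (a < b)%N -> (b < j0)%N -> E a != E b) -> False.
Proof.
move=> ij Eij dist.
have [k3 V0 B0 nf0 [I0 Vn0]] := wok i0.
have [k3j _ _ _ _] := wok j0.
have [Ek [Tj|Tj]] := tedge_inj k3 k3j Eij.
  have Wj : w j0 = w i0 by rewrite (pair_eta (w j0)) Tj -Ek -pair_eta.
  apply: (@cyc_from i0 (j0 - i0)); first by rewrite subn_gt0.
    have -> : (i0 + (j0 - i0).-1 = j0.-1)%N by lia.
    rewrite -Wj; have := wcomp j0.-1; by rewrite prednK //; lia.
  move=> t /andP[t0 tm]; rewrite eq_sym; apply: dist; lia.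
set T := (w i0).1 in V0 B0 nf0 I0 Vn0 Tj *; set k := (w i0).2 in k3 B0 nf0 I0 Vn0 Tj Ek *.
have [K1 K2] := nbrK k3 I0.
have Wj : w j0 = (nbr T k, k) by rewrite (pair_eta (w j0)) Tj -Ek.
have j2 : (i0.+1 < j0)%N.
  rewrite ltn_neqAle ij andbT; apply/eqP => ej.
  case: (wcomp i0) => [[j [j3 Hj jk E2 [E1 I']]]|[_ [ne _ _ _]]].
    rewrite ej Wj /= in E1.
    have := congr1 (fun X => nbr X k) E1; rewrite K1 (proj1 (nbrK k3 I')) => ET.
    by have := nbr_neq T j; rewrite -ET eqxx.
  by move: ne; rewrite ej Wj /= eqxx.
set a := i0.+1; set b := j0.-1.
have ab : (a <= b)%N by rewrite /a /b; lia.
have bj : (b < j0)%N by rewrite /b; lia.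
have bS : b.+1 = j0 by rewrite /b prednK //; lia.
have Eab : E a = E b -> a = b.
  move=> Eq; case: (ltnP a b) => [lab|bla]; last by apply/eqP; rewrite eqn_leq ab bla.
  by have := dist a b lab bj; rewrite Eq eqxx.
have [kb3 Vb Bb nfb [Ib Vnb]] := wok b.
have wrap : compat n h (w b) (w a).
  have := wcomp b; rewrite bS Wj.
  case=> [[j' [j'3 Hj' jk E2 [E1 I']]]|[nofX [ne k'3 E1 I']]].
  - rewrite /= in E2 E1; exfalso.
    rewrite -E2 in E1 I' jk.
    have ET : T = nbr (w b).1 j'.
      by have := congr1 (fun X => nbr X k) E1; rewrite K1 (proj1 (nbrK k3 I')).
    have HT : hasflat n h T j' by rewrite ET; apply: hasflat_nbr.
    have IX : int' (tedge (w b).1 j') by case/andP: Hj'.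
    have KX := proj1 (nbrK j'3 IX).
    case: (wcomp i0) => [[j'' [j''3 Hj'' jk' E2' [E1' I'']]]|[nofT _]]; last first.
      by move: (nofT j' j'3); rewrite HT.
    have ej := flat_uniq Hsmall V0 Hj'' HT; subst j''.
    rewrite -/a -/T -/k in E2' E1'.
    rewrite -ET in KX.
    have Wa : w a = (nbr (w b).1 k, k) by rewrite (pair_eta (w a)) E1' E2' ET -{1}ET KX.
    have Ib' : int' (tedge (w b).1 k) by rewrite E2.
    have Ea : E a = E b by rewrite Wa /= (proj2 (nbrK k3 Ib')) -E2.
    have := Eab Ea => eab.
    have eq : w a = w b by rewrite eab.
    rewrite eq in Wa.
    have H1 := congr1 fst Wa; rewrite /= in H1.
    by have := nbr_neq (w b).1 k; rewrite -H1 eqxx.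
  - rewrite /= in E1 ne.
    have EX : T = (w b).1.
      by have := congr1 (fun X => nbr X k) E1; rewrite K1 (proj1 (nbrK k3 I')).
    case: (wcomp i0) => [[j'' [j''3 Hj'' _ _ _]]|[nofT [ne2 k''3 E1' I'']]].
      by move: (nofX j'' j''3); rewrite -EX Hj''.
    rewrite -/a -/T -/k in ne2 k''3 E1' I''.
    right; split => //; split => //.
    + apply/negP => /eqP Ekk.
      have Ea : E a = E b.
        rewrite (pair_eta (w a)) E1' /= -EX -Ekk (proj2 (nbrK k''3 I'')).
        by rewrite EX Ekk.
      have := Eab Ea => eab.
      have := nbr_neq T (w a).2; rewrite -E1' EX.
      by rewrite eab eqxx.
    + by rewrite E1' EX.
    + by rewrite -EX.
apply: (@cyc_from a (j0 - a)); first by rewrite subn_gt0.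
  have -> : (a + (j0 - a).-1 = b)%N by rewrite /a /b; lia.
  exact: wrap.
move=> t /andP[t0 tm]; rewrite eq_sym; apply: dist; rewrite /a; lia.
Qed.

End Cyc.


Section Main.
Variable R : realFieldType.
Variable n : nat.
Variable h : labelling R.
Hypothesis Hsmall : flatspaces_small n h.
Hypothesis Hv : hive_vertex n h.
Local Open Scope ring_scope.
Notation Gd := (int_comb_border n h).

Lemma walk_false (s0 : tri * nat) : ok n h s0 -> False.
Proof.
move=> ok0.
have SE : forall s, exists s', ok n h s -> compat n h s s' /\ ok n h s'.
  move=> s; case: (classic (ok n h s)) => [H|H].
    by have [s' Hs'] := succ_ex Hsmall H; exists s'.
  by exists s.
pose succ s := proj1_sig (constructive_indefinite_description _ (SE s)).
have Hsucc : forall s, ok n h s -> compat n h s (succ s) /\ ok n h (succ s).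
  by move=> s; exact: (proj2_sig (constructive_indefinite_description _ (SE s))).
pose w t := iter t succ s0.
have wok : forall t, ok n h (w t).
  by elim=> [|t IH] //; rewrite /w iterS; exact: (proj2 (Hsucc _ IH)).
have wcomp : forall t, compat n h (w t) (w t.+1).
  by move=> t; rewrite /w iterS; exact: (proj1 (Hsucc _ (wok t))).
pose E t := tedge (w t).1 (w t).2.
have Ebd : forall t, [/\ ((E t).1.1 < 3)%N, ((E t).1.2 < n.+1)%N & ((E t).2 < n.+1)%N].
  move=> t; have [k3 V _ _ _] := wok t.
  have := validT_edge V k3; rewrite /E; case: (tedge _ _) => [[k a b]] /= /andP[? ?].
  split => //; lia.
pose N := (3 * n.+1 * n.+1)%N.
pose F (t : 'I_N.+1) : 'I_3 * 'I_n.+1 * 'I_n.+1 :=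
  (inord (E t).1.1, inord (E t).1.2, inord (E t).2).
have [x [y xy Fxy]] : exists x : 'I_N.+1, exists2 y : 'I_N.+1, x != y & F x = F y.
  apply/injectivePn; apply/negP => /injectiveP inj.
  have := @leq_card _ _ F inj; rewrite !card_prod !card_ord /N; lia.
have Exy : E x = E y.
  have [a1 a2 a3] := Ebd x; have [b1 b2 b3] := Ebd y.
  move: Fxy; rewrite /F => [[e1 e2 e3]].
  move: (congr1 (@nat_of_ord _) e1) (congr1 (@nat_of_ord _) e2) (congr1 (@nat_of_ord _) e3).
  rewrite !inordK // => {}e1 {}e2 {}e3.
  move: e1 e2 e3; case: (E x) => [[? ?] ?]; case: (E y) => [[? ?] ?] /=.
  by move=> -> -> ->.
have [i1 [j1 [ij1 Eij1]]] : exists i j, (i < j)%N /\ E i = E j.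
  case: (ltngtP x y) => [lt|gt|eq].
  - by exists x, y.
  - by exists y, x.
  - by move: xy; rewrite (val_inj eq) eqxx.
pose P j := [exists i : 'I_j, E i == E j].
have exP : exists j, P j.
  by exists j1; apply/existsP; exists (Ordinal ij1); rewrite /= Eij1.
case: (ex_minnP exP) => j0 /existsP [i0 /eqP Ei0] jmin.
apply: (@repeat_false R n h Hsmall Hv w wok wcomp i0 j0) => //.
move=> a b ab bj; apply/negP => /eqP Eab.
have : P b by apply/existsP; exists (Ordinal ab); apply/eqP; exact: Eab.
by move/jmin; rewrite leqNgt bj.
Qed.

End Main.


Theorem proposition3p2 (R : realFieldType) (n : nat) (h : labelling R) :
  (1 <= n)%N ->
  hive_vertex n h ->
  flatspaces_small n h ->
  forall p q : nat, in_H n p q -> int_comb_border n h (h p q).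
Proof.
move=> _ Hv Hs p q Hpq; apply: NNPP => nG.
have [i [ip Bi]] : exists i, (i < p)%N /\ ~ int_comb_border n h (lab h (0%N, i, q)).
  apply: NNPP => H; apply: nG.
  have G : forall i, (i <= p)%N -> int_comb_border n h (h i q).
    elim=> [|i IH] ip.
      apply: Gd_border; rewrite /in_B /in_H eqxx /= andbT.
      by move: Hpq; rewrite /in_H; lia.
    have -> : h i.+1 q = (h i q + lab h (0%N, i, q))%R by rewrite /=; ring.
    apply: Gd_add; first by apply: IH; lia.
    apply: NNPP => nb; apply: H; exists i; split => //; lia.
  exact: G.
have VX : validT n (true, i, q) by move: Hpq; rewrite /in_H /=; lia.
have e0 : tedge (true, i, q) 0 = (0%N, i, q) by [].
case: (boolP (hasflat n h (true, i, q) 0)) => HX.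
  have B0 : ~ int_comb_border n h (lab h (tedge (true, i, q) 0)) by rewrite e0.
  have [k' [k'3 k'0 Bk']] := other_bad (isT : (0 < 3)%N) B0.
  have nf : ~~ hasflat n h (true, i, q) k'.
    apply/negP => Hk; have := flat_uniq Hs VX Hk HX => E.
    by rewrite E eqxx in k'0.
  have Ok := step_ok Hs VX k'3 Bk' nf.
  exact: walk_false Hs Hv _ Ok.
have B0 : ~ int_comb_border n h (lab h (tedge (true, i, q) 0)) by rewrite e0.
have Ok := step_ok Hs VX (isT : (0 < 3)%N) B0 HX.
exact: walk_false Hs Hv _ Ok.
Qed.
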